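(* Let $q\in\mathbb{N}_+$, let $p$ be an odd prime, $n\ge 2$, and let $\sigma\in\mathbb{Z}^{n-1}$ with all entries in $[-\frac{p-1}{2},\frac{p-1}{2}]$ such that $\|\sigma\bmod p\|_q = (p^q-1)^{1/q}$ and $\|k\sigma \bmod p\|_q > \|\sigma\bmod p\|_q$ for every integer $k\not\equiv 0,\pm1 \pmod p$. Let $\vec u = (1,\sigma)\in\mathbb{Z}^n$, $W_i = p\vec e_i$ for $1\le i\le n$, and $\mathcal{L}_+ = \operatorname{span}_{\mathbb{Z}}(W_1,\dots,W_n,\vec u)\subset\mathbb{R}^n$. Then every nonzero $\vec x\in\mathcal{L}_+$ satisfies $\|\vec x\|_q\ge p$, and the vectors of $\mathcal{L}_+$ with $\ell^q$-norm exactly $p$ are precisely $\pm W_1,\dots,\pm W_n,\pm\vec u$.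
   Context: $\|\vec x\|_q = (\sum_i|x_i|^q)^{1/q}$. For real $\alpha$, $|\alpha|_p = \min_{z\in\mathbb{Z}}|\alpha - zp|$, and $\|\vec x\bmod p\|_q = (\sum_i|x_i|_p^q)^{1/q}$. $\vec e_i$ denotes the $i$-th standard unit vector. *)

(* Defs.v *)
From HB Require Import structures.
From mathcomp Require Import all_boot all_order all_algebra.
From mathcomp Require Import all_classical all_reals all_analysis.
Set Implicit Arguments. Unset Strict Implicit. Unset Printing Implicit Defensive.
Import Order.TTheory GRing.Theory Num.Theory.
Local Open Scope ring_scope.

(* |a|_p = min_{z in Z} |a - z p| for an integer a and p > 0:
   the distance from a to the nearest multiple of p. *)
Definition absp (p : nat) (a : int) : int :=
  Num.min (a %% p%:Z)%Z (p%:Z - (a %% p%:Z)%Z).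

Definition lqnorm (R : realType) (q : nat) (n : nat) (x : 'rV[int]_n) : R :=
  powR (\sum_(i < n) (`|x 0 i|%:~R : R) ^+ q) (q%:R^-1).

Definition lqmodnorm (R : realType) (q p : nat) (n : nat) (x : 'rV[int]_n) : R :=
  powR (\sum_(i < n) ((absp p (x 0 i))%:~R : R) ^+ q) (q%:R^-1).

Definition in_Lplus (n p : nat) (u x : 'rV[int]_n) : Prop :=
  exists (c : 'rV[int]_n) (k : int), x = p%:Z *: c + k *: u.

(* Main.v *)
Require Import Defs.
From HB Require Import structures.
From mathcomp Require Import all_boot all_order all_algebra.
From mathcomp Require Import all_classical all_reals all_analysis.
Import Order.TTheory GRing.Theory Num.Theory.
Local Open Scope ring_scope.
From mathcomp Require Import zify.

Lemma absp_ge0 p a : (0 < p)%N -> 0 <= absp p a.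
Proof. rewrite /absp => hp. lia. Qed.
Lemma absp_le p a : (0 < p)%N -> absp p a <= `|a|.
Proof. rewrite /absp => hp. have := divz_eq a p%:Z. set d := (a %/ p%:Z)%Z.
have [hd|hd] := lerP 0 d; nia. Qed.
Lemma absp_modD p a c : absp p (a + p%:Z * c) = absp p a.
Proof. rewrite /absp. by rewrite addrC mulrC modzMDl. Qed.
Lemma absp_small p a : `|a| * 2 < p%:Z -> absp p a = `|a|.
Proof. rewrite /absp => hp. have [ha|ha] := lerP 0 a.
  rewrite modz_small; lia.
rewrite -(modzMDl 1) modz_small; lia. Qed.
Lemma absp_opp p a : (0 < p)%N -> absp p (- a) = absp p a.
Proof. rewrite /absp => hp. have := divz_eq a p%:Z. have := divz_eq (- a) p%:Z.
set d := (a %/ p%:Z)%Z. set d' := (- a %/ p%:Z)%Z.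
have [hd|hd] := lerP (d + d') (-2); first nia.
have [hd2|hd2] := lerP 1 (d + d'); first nia.
have [hd3|hd3] := lerP 0 (d + d'); nia. Qed.
Lemma absp_pos p a : (0 < p)%N -> (a %% p%:Z != 0)%Z -> 1 <= absp p a.
Proof. rewrite /absp => hp. lia. Qed.

Lemma rootK (R : realType) (q : nat) (a : R) : (0 < q)%N -> 0 <= a ->
  (powR a (q%:R^-1)) ^+ q = a.
Proof.
move=> hq ha. rewrite -powR_mulrn ?powR_ge0 // -powRrM mulVf ?powRr1 //.
by rewrite pnatr_eq0 -lt0n.
Qed.

Lemma root_ge (R : realType) (q : nat) (N : int) (P : nat) : (0 < q)%N -> 0 <= N ->
  ((P%:R : R) <= powR (N%:~R) (q%:R^-1)) = ((P%:Z) ^+ q <= N).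
Proof.
move=> hq hN. rewrite -(ler_pXn2r hq) ?nnegrE ?powR_ge0 // rootK ?ler0z //.
by rewrite -(ler_int R) rmorphXn.
Qed.

Lemma root_eq (R : realType) (q : nat) (N : int) (P : nat) : (0 < q)%N -> 0 <= N ->
  (powR (N%:~R) (q%:R^-1) = (P%:R : R)) <-> (N = (P%:Z) ^+ q).
Proof.
move=> hq hN; split => [h|->].
  apply/eqP; rewrite -(eqr_int R) rmorphXn /=.
  have -> : ((P%:Z)%:~R : R) = P%:R by [].
  by rewrite -h rootK ?ler0z.
apply/eqP; rewrite -(eqrXn2 hq) ?powR_ge0 ?ler0n // rootK ?rmorphXn //.
by rewrite exprn_ge0 ?ler0z.
Qed.

Lemma root_lt (R : realType) (q : nat) (N M : int) : (0 < q)%N -> 0 <= N -> 0 <= M ->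
  powR (N%:~R : R) (q%:R^-1) < powR (M%:~R) (q%:R^-1) -> N < M.
Proof.
move=> hq hN hM h. rewrite -(ltr_int R) -(@rootK R q (N%:~R) hq) ?ler0z //.
rewrite -[X in _ < X](@rootK R q (M%:~R) hq) ?ler0z //.
by rewrite ltrXn2r ?powR_ge0 // -lt0n.
Qed.

Definition sq (q n : nat) (x : 'rV[int]_n) : int := \sum_(i < n) `|x 0 i| ^+ q.
Definition smq (q p n : nat) (x : 'rV[int]_n) : int := \sum_(i < n) (absp p (x 0 i)) ^+ q.
Arguments sq q {n} x.
Arguments smq q p {n} x.

Lemma lqnormE (R : realType) q n (x : 'rV[int]_n) :
  lqnorm R q x = powR ((sq q x)%:~R) (q%:R^-1).
Proof. by rewrite /lqnorm /sq rmorph_sum; congr powR; apply: eq_bigr => i _; rewrite rmorphXn. Qed.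

Lemma lqmodnormE (R : realType) q p n (x : 'rV[int]_n) :
  lqmodnorm R q p x = powR ((smq q p x)%:~R) (q%:R^-1).
Proof. by rewrite /lqmodnorm /smq rmorph_sum; congr powR; apply: eq_bigr => i _; rewrite rmorphXn. Qed.

Lemma sq_ge0 q n (x : 'rV[int]_n) : 0 <= sq q x.
Proof. by apply: sumr_ge0 => i _; rewrite exprn_ge0. Qed.

Lemma smq_ge0 q p n (x : 'rV[int]_n) : (0 < p)%N -> 0 <= smq q p x.
Proof. by move=> hp; apply: sumr_ge0 => i _; rewrite exprn_ge0 ?absp_ge0. Qed.

Lemma smq_le_sq q p n (x : 'rV[int]_n) : (0 < p)%N -> smq q p x <= sq q x.
Proof.
move=> hp; apply: ler_sum => i _; apply: lerXn2r; rewrite ?nnegrE ?absp_ge0 ?absp_le //.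
Qed.

Lemma sqN q n (x : 'rV[int]_n) : sq q (- x) = sq q x.
Proof. by apply: eq_bigr => i _; rewrite mxE normrN. Qed.

Lemma sq_delta q p n (j : 'I_n) : (0 < q)%N -> sq q (p%:Z *: delta_mx 0 j) = p%:Z ^+ q.
Proof.
move=> hq; rewrite /sq (bigD1 j) //= big1 ?addr0 => [|i hij]; rewrite !mxE eqxx /=.
  by rewrite eqxx mulr1.
by rewrite (negbTE hij) mulr0 normr0 expr0n; case: q hq.
Qed.

Lemma caseB p q n (u d : 'rV[int]_n) (s : int) : (0 < q)%N -> (0 < p)%N -> (s = 1 \/ s = -1) ->
 (forall j, `|u 0 j| * 2 < p%:Z) -> sq q u = p%:Z ^+ q ->
 p%:Z ^+ q <= sq q (p%:Z *: d + s *: u) /\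
 (sq q (p%:Z *: d + s *: u) = p%:Z ^+ q -> p%:Z *: d + s *: u = s *: u).
Proof.
move=> hq hp hs hu hsu.
have hx j : (p%:Z *: d + s *: u) 0 j = p%:Z * d 0 j + s * u 0 j by rewrite !mxE.
have ha j : absp p ((p%:Z *: d + s *: u) 0 j) = `|u 0 j|.
  rewrite hx addrC absp_modD.
  by case: hs => ->; [rewrite mul1r | rewrite mulN1r absp_opp //]; exact: absp_small.
have hle j : `|u 0 j| <= `|(p%:Z *: d + s *: u) 0 j| by rewrite -ha absp_le.
have hge : p%:Z ^+ q <= sq q (p%:Z *: d + s *: u).
  rewrite -hsu /sq; apply: ler_sum => j _; apply: lerXn2r; rewrite ?nnegrE ?normr_ge0 //.
split=> // heq.
have E : sq q (p%:Z *: d + s *: u) = sq q u by rewrite heq hsu.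
have hj j : `|(p%:Z *: d + s *: u) 0 j| = `|u 0 j|.
  have : \sum_j (`|(p%:Z *: d + s *: u) 0 j| ^+ q - `|u 0 j| ^+ q) = 0.
    by move: E; rewrite /sq sumrB => ->; rewrite subrr.
  move=> Hs.
  have hnn : forall i : 'I_n, true -> 0 <= `|(p%:Z *: d + s *: u) 0 i| ^+ q - `|u 0 i| ^+ q.
    by move=> i _; rewrite subr_ge0 lerXn2r ?nnegrE ?normr_ge0.
  have := psumr_eq0P hnn Hs (i:=j) isT.
  move/eqP; rewrite subr_eq0 eqrXn2 ?normr_ge0 //; by move/eqP.
apply/rowP => j; have h1 := hj j; have h2 := hu j; rewrite hx in h1 *; rewrite [in RHS]mxE.
have hp' : 0 < p%:Z by lia.
have hD : `|p%:Z * d 0 j| < p%:Z.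
  move: h1 h2; set D := p%:Z * d 0 j; set U := u 0 j; case: hs => ->; lia.
have -> : d 0 j = 0.
  have [h3|h3] := lerP 1 (d 0 j); first nia.
  have [h4|h4] := lerP (d 0 j) (-1); first nia.
  lia.
by rewrite mulr0 add0r.
Qed.

Lemma caseA p q n (d : 'rV[int]_n) : (0 < q)%N -> (0 < p)%N -> p%:Z *: d != 0 ->
  p%:Z ^+ q <= sq q (p%:Z *: d) /\
  (sq q (p%:Z *: d) = p%:Z ^+ q -> exists j : 'I_n,
     p%:Z *: d = p%:Z *: delta_mx 0 j \/ p%:Z *: d = - (p%:Z *: delta_mx 0 j)).
Proof.
move=> hq hp hx0.
have hx j : (p%:Z *: d) 0 j = p%:Z * d 0 j by rewrite mxE.
have [j hj] : exists j, (p%:Z *: d) 0 j != 0.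
  case: (pickP (fun j => (p%:Z *: d) 0 j != 0)) => [j hj|h]; first by exists j.
  exfalso; move/eqP: hx0; apply; apply/rowP => i; rewrite [RHS]mxE.
  by apply/eqP; move: (h i) => /negbFE.
have hpz : 0 < p%:Z by lia.
have hpj : p%:Z <= `|(p%:Z *: d) 0 j|.
  move: hj; rewrite hx => hj.
  have [h3|h3] := lerP 1 (d 0 j); first nia.
  have [h4|h4] := lerP (d 0 j) (-1); first nia.
  have : d 0 j = 0 by lia.
  by move=> e; rewrite e mulr0 eqxx in hj.
have hsp : sq q (p%:Z *: d) = `|(p%:Z *: d) 0 j| ^+ q +
    \sum_(i < n | i != j) `|(p%:Z *: d) 0 i| ^+ q by rewrite /sq (bigD1 j).
have hrest : 0 <= \sum_(i < n | i != j) `|(p%:Z *: d) 0 i| ^+ q.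
  by apply: sumr_ge0 => i _; rewrite exprn_ge0.
have hpq : p%:Z ^+ q <= `|(p%:Z *: d) 0 j| ^+ q.
  by apply: lerXn2r; rewrite ?nnegrE ?normr_ge0 ?ler0n.
split; first by rewrite hsp; lia.
move=> heq.
have hrest0 : \sum_(i < n | i != j) `|(p%:Z *: d) 0 i| ^+ q = 0 by lia.
have hxj : `|(p%:Z *: d) 0 j| ^+ q = p%:Z ^+ q by lia.
have hxjp : `|(p%:Z *: d) 0 j| = p%:Z.
  by apply/eqP; rewrite -(eqrXn2 hq) ?normr_ge0 ?ler0n ?hxj.
have hoth i : i != j -> (p%:Z *: d) 0 i = 0.
  move=> hij.
  have hnn : forall i : 'I_n, i != j -> 0 <= `|(p%:Z *: d) 0 i| ^+ q.
    by move=> i' _; rewrite exprn_ge0.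
  have := psumr_eq0P hnn hrest0 hij.
  by move/eqP; rewrite expf_eq0 normr_eq0 => /andP[_ /eqP].
exists j.
move: hxjp; rewrite hx => hn.
have [hd|hd] : d 0 j = 1 \/ d 0 j = -1.
  have [h3|h3] := lerP 2 (d 0 j); first nia.
  have [h4|h4] := lerP (d 0 j) (-2); first nia.
  have : d 0 j != 0 by apply: contraNneq hj => e; rewrite hx e mulr0.
  lia.
- left; apply/rowP => i; rewrite !mxE /=.
  have [->|hij] := eqVneq i j; first by rewrite hd ?eqxx /= ?mulr1.
  have := hoth i hij; rewrite hx => ->.
  by rewrite ?(negbTE hij) /= mulr0.
- right; apply/rowP => i; rewrite !mxE /=.
  have [->|hij] := eqVneq i j; first by rewrite hd ?eqxx /= ?mulr1 ?mulrN1.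
  have := hoth i hij; rewrite hx => ->.
  by rewrite ?(negbTE hij) /= mulr0 oppr0.
Qed.
(* n = 1 + m with m >= 1; sigma in Z^m = Z^(n-1); u = (1, sigma) = row_mx 1 sigma. *)
Theorem lemma4p4 (R : realType) (q p m : nat) (sigma : 'rV[int]_m) :
  (0 < q)%N -> prime p -> odd p -> (1 <= m)%N ->
  (forall i, - ((p.-1)./2)%:Z <= sigma 0 i <= ((p.-1)./2)%:Z) ->
  lqmodnorm R q p sigma = powR ((p%:R : R) ^+ q - 1) (q%:R^-1) ->
  (forall k : int,
      ~~ [|| (k == 0 %[mod p%:Z])%Z, (k == 1 %[mod p%:Z])%Z | (k == -1 %[mod p%:Z])%Z] ->
      lqmodnorm R q p sigma < lqmodnorm R q p (k *: sigma)) ->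
  let u : 'rV[int]_(1 + m) := row_mx 1 sigma in
  (forall x : 'rV[int]_(1 + m), in_Lplus p u x -> x != 0 -> (p%:R : R) <= lqnorm R q x) /\
  (forall x : 'rV[int]_(1 + m),
      (in_Lplus p u x /\ lqnorm R q x = (p%:R : R)) <->
      ((exists i : 'I_(1 + m), x = p%:Z *: delta_mx 0 i \/ x = - (p%:Z *: delta_mx 0 i))
       \/ x = u \/ x = - u)).
Proof.
move=> hq hp hodd hm hbd hnorm hk u.
have p2 := prime_gt1 hp.
have p3 : (2 < p)%N.
  have : p != 2 by apply: contraTneq hodd => ->.
  move=> ?; lia.
have hp0 : (0 < p)%N by lia.
have hpz : 2 < p%:Z by lia.
have hsigb i : `|sigma 0 i| * 2 < p%:Z.
  have := hbd i; have := odd_double_half (p.-1).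
  move: ((p.-1)./2) (odd p.-1) => h b; lia.
have hu j : `|u 0 j| * 2 < p%:Z.
  case: (splitP j) => [j' hj|j' hj].
    have -> : j = lshift m j' by apply/val_inj.
    by rewrite /u row_mxEl ord1 mxE /=; lia.
  have -> : j = rshift 1 j' by apply/val_inj.
  by rewrite /u row_mxEr.
have hsig : smq q p sigma = p%:Z ^+ q - 1.
  apply/eqP; rewrite -(eqr_int R); apply/eqP.
  move: hnorm; rewrite lqmodnormE => /(congr1 (fun r => r ^+ q)).
  rewrite !rootK //; first by move=> ->; rewrite rmorphB rmorphXn rmorph1.
    by rewrite subr_ge0 exprn_ege1 ?ler1n.
  by rewrite ler0z smq_ge0.
have hsu : sq q u = p%:Z ^+ q.
  rewrite /sq big_split_ord big_ord1 /= /u row_mxEl mxE /= normr1 expr1n.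
  rewrite (eq_bigr (fun i => absp p (sigma 0 i) ^+ q)) => [|i _]; last first.
    by rewrite row_mxEr absp_small.
  by rewrite -/(smq q p sigma) hsig addrC subrK.
have hbad k : ~~ [|| (k == 0 %[mod p%:Z])%Z, (k == 1 %[mod p%:Z])%Z | (k == -1 %[mod p%:Z])%Z] ->
    p%:Z ^+ q < \sum_j absp p (k * u 0 j) ^+ q.
  move=> hk0; have := hk k hk0; rewrite !lqmodnormE => /root_lt.
  rewrite hq smq_ge0 // smq_ge0 // => /(_ isT isT isT) hlt.
  rewrite big_split_ord big_ord1 /= /u row_mxEl mxE /= mulr1.
  rewrite (eq_bigr (fun i => absp p ((k *: sigma) 0 i) ^+ q)) => [|i _]; last first.
    by rewrite row_mxEr mxE.
  rewrite -/(smq q p (k *: sigma)).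
  have hk1 : 1 <= absp p k.
    apply: absp_pos => //; move: hk0; rewrite mod0z; by case/norP.
  have : 1 <= absp p k ^+ q by rewrite exprn_ege1.
  lia.
have key x : in_Lplus p u x ->
  (exists d, x = p%:Z *: d) \/
  (exists d (s : int), (s = 1 \/ s = -1) /\ x = p%:Z *: d + s *: u) \/
  p%:Z ^+ q < sq q x.
  case=> c [k ->].
  have dk := divz_eq k p%:Z. move: dk. set t := (k %/ p%:Z)%Z => dk.
  have [h0|h0] := boolP (k == 0 %[mod p%:Z])%Z.
    left; exists (c + t *: u).
    move/eqP: h0; rewrite mod0z => h0.
    have -> : k = p%:Z * t by lia.
    by rewrite scalerDr scalerA.
  have [h1|h1] := boolP (k == 1 %[mod p%:Z])%Z.
    right; left; exists (c + t *: u), 1; split; first by left.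
    move/eqP: h1; rewrite (modz_small (m:=1)); last by lia.
    move=> h1; have -> : k = p%:Z * t + 1 by lia.
    by rewrite scalerDl scalerDr scalerA addrA.
  have [h2|h2] := boolP (k == -1 %[mod p%:Z])%Z.
    right; left; exists (c + (t + 1) *: u), (-1); split; first by right.
    move/eqP: h2; rewrite -(modzMDl 1 (-1)) (modz_small (m:=_ + _)); last by lia.
    move=> h2; have -> : k = p%:Z * (t + 1) + -1 by lia.
    by rewrite scalerDl scalerDr scalerA addrA.
  right; right.
  apply: (lt_le_trans (hbad k _)); first by rewrite (negbTE h0) (negbTE h1) (negbTE h2).
  apply: (le_trans _ (@smq_le_sq q p _ _ hp0)).
  rewrite le_eqVlt; apply/orP; left; apply/eqP; apply: eq_bigr => j _.
  by rewrite !mxE addrC absp_modD.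
split.
  move=> x hx hx0; rewrite lqnormE root_ge ?sq_ge0 //.
  case: (key x hx) => [[d hd]|[[d [s [hs hd]]]|hlt]].
  - by rewrite hd in hx0 *; case: (@caseA p q _ d hq hp0 hx0).
  - by rewrite hd; case: (@caseB p q _ u d s hq hp0 hs hu hsu).
  - by rewrite ltW.
move=> x; split.
  move=> [hx]; rewrite lqnormE root_eq ?sq_ge0 // => heq.
  case: (key x hx) => [[d hd]|[[d [s [hs hd]]]|hlt]].
  - have hx0 : p%:Z *: d != 0.
      rewrite -hd; apply/eqP => e; move: heq; rewrite e.
      rewrite /sq big1 => [|i _]; last by rewrite mxE normr0 expr0n (negbTE (lt0n_neq0 hq)).
      by move/esym/eqP; rewrite expf_eq0; lia.
    case: (@caseA p q _ d hq hp0 hx0) => _ /(_ _) [|j hj]; first by rewrite -hd.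
    by left; exists j; rewrite hd.
  - case: (@caseB p q _ u d s hq hp0 hs hu hsu) => _ /(_ _) H; rewrite -hd in H.
    have := H heq; rewrite hd => ->.
    by right; case: hs => ->; [left; rewrite scale1r | right; rewrite scaleN1r].
  - by move: hlt; rewrite heq ltxx.
case=> [[j [->|->]]|[->|->]]; split.
- by exists (delta_mx 0 j), 0; rewrite scale0r addr0.
- by rewrite lqnormE root_eq ?sq_ge0 // sq_delta.
- by exists (- delta_mx 0 j), 0; rewrite scale0r addr0 scalerN.
- by rewrite lqnormE root_eq ?sq_ge0 // sqN sq_delta.
- by exists 0, 1; rewrite scaler0 add0r scale1r.
- by rewrite lqnormE root_eq ?sq_ge0.
- by exists 0, (-1); rewrite scaler0 add0r scaleN1r.
- by rewrite lqnormE root_eq ?sq_ge0 // sqN.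
Qed.
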